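(* Let $M\geq 1$ and consider the bilateral cooperation model described in the context, restricted to submodular utility vectors. Then every DSIC mechanism that works for arbitrary submodular valuations (i.e. is DSIC and is evaluated over all pairs of submodular buyer and seller vectors) has competitive ratio at most $1/H_M$, where $H_M=\sum_{j=1}^M \frac1j$ is the $M$-th harmonic number.
   Context: Bilateral cooperation model: there are two agents, a buyer and a seller, and options $0,1,\dots,M$. A buyer utility vector is $b=(b_1,\dots,b_M)\in\mathbb{R}^M$ and a seller utility vector is $s=(s_1,\dots,s_M)\in\mathbb{R}^M$; by convention $b_0=s_0=0$. A vector $v=(v_1,\dots,v_M)$ (with $v_0=0$) is submodular if $v_{i+1}-v_i\leq v_i-v_{i-1}$ for every $i\in\{1,\dots,M-1\}$. Define $\mathrm{Feasible}(b,s)=\{i\in\{0,\dots,M\}: b_i\geq 0 \text{ and } s_i\geq 0\}$ and $OPT(b,s)=\max_{i\in \mathrm{Feasible}(b,s)}(b_i+s_i)$. A mechanism is a function $r$ mapping each pair of reported vectors $(b',s')$ to a probability vector $(r_0(b',s'),\dots,r_M(b',s'))$. The mechanism is DSIC if for all true vectors $b,s$ and reports $b',s'$ (all in the admissible class): $\sum_{i=1}^M r_i(b,s')\,b_i\geq \sum_{i=1}^M r_i(b',s')\,b_i$ and $\sum_{i=1}^M r_i(b',s)\,s_i\geq \sum_{i=1}^M r_i(b',s')\,s_i$. The gain is $G_r(b,s)=\sum_{i=1}^M r_i(b,s)(b_i+s_i)$ and the competitive ratio is the minimum of $G_r(b,s)/OPT(b,s)$ over admissible (here: submodular) $b,s$.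 *)

(* Defs.v *)
From HB Require Import structures.
From mathcomp Require Import all_boot all_order all_algebra.
From mathcomp Require Import reals.
Set Implicit Arguments. Unset Strict Implicit. Unset Printing Implicit Defensive.
Import Order.TTheory GRing.Theory Num.Theory.
Local Open Scope ring_scope.

(* A utility vector over options 0..M is a function 'I_M.+1 -> R; the
   convention v_0 = 0 is part of admissibility. *)
Definition uvec (R : realType) (M : nat) := 'I_M.+1 -> R.

Definition submodular (R : realType) (M : nat) (v : uvec R M) : Prop :=
  v ord0 = 0 /\
  forall i : 'I_M.+1, (0 < i)%N -> (i < M)%N ->
    v (inord i.+1) - v i <= v i - v (inord i.-1).

Definition prob_vec (R : realType) (M : nat) (p : uvec R M) : Prop :=
  (forall i, 0 <= p i) /\ \sum_(i < M.+1) p i = 1.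

Definition mechanism (R : realType) (M : nat) := uvec R M -> uvec R M -> uvec R M.

Definition is_mechanism (R : realType) (M : nat) (r : mechanism R M) : Prop :=
  forall b s, prob_vec (r b s).

Definition expu (R : realType) (M : nat) (p v : uvec R M) : R :=
  \sum_(i < M.+1 | i != ord0) p i * v i.

Definition DSIC (R : realType) (M : nat) (r : mechanism R M) : Prop :=
  forall b s b' s' : uvec R M,
    submodular b -> submodular s -> submodular b' -> submodular s' ->
    expu (r b s') b >= expu (r b' s') b /\
    expu (r b' s) s >= expu (r b' s') s.

(* OPT(b,s) = max over feasible i (b_i >= 0 and s_i >= 0) of b_i + s_i;
   option 0 is always feasible with value 0, so seeding the max with 0 is exact. *)
Definition OPT (R : realType) (M : nat) (b s : uvec R M) : R :=
  \big[Num.max/0]_(i < M.+1 | (0 <= b i) && (0 <= s i)) (b i + s i).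

Definition gain (R : realType) (M : nat) (r : mechanism R M) (b s : uvec R M) : R :=
  \sum_(i < M.+1 | i != ord0) r b s i * (b i + s i).

Definition harmonic (R : realType) (M : nat) : R :=
  \sum_(1 <= j < M.+1) (j%:R)^-1.

(* Main.v *)
Require Import Defs.
From HB Require Import structures.
From mathcomp Require Import all_boot all_order all_algebra.
From mathcomp Require Import reals.
From mathcomp Require Import ring lra zify.
From Stdlib Require Classical_Prop.
Import Order.TTheory GRing.Theory Num.Theory.
Local Open Scope ring_scope.

Definition Sv {R : realType} {M : nat} : uvec R M := fun i => (i : nat)%:R.
Definition Bv {R : realType} {M : nat} (t : nat) : uvec R M :=
  fun i => if (i : nat) == 0%N then 0 else 1 - (i : nat)%:R / t%:R.
Definition sc {R : realType} {M : nat} (C : R) (v : uvec R M) : uvec R M :=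
  fun i => C * v i.

Lemma OPT_ge {R : realType} {M : nat} (b s : uvec R M) (i : 'I_M.+1) :
  0 <= b i -> 0 <= s i -> b i + s i <= OPT b s.
Proof.
by move=> hb hs; rewrite /OPT; apply: (le_bigmax_cond _ (fun j => b j + s j)); rewrite hb hs.
Qed.

Lemma expu_sc {R : realType} {M : nat} (p v : uvec R M) C :
  expu p (sc C v) = C * expu p v.
Proof. by rewrite /expu mulr_sumr; apply: eq_bigr => i _; rewrite /sc mulrCA. Qed.

Lemma gainE {R : realType} {M : nat} (r : mechanism R M) b s :
  gain r b s = expu (r b s) b + expu (r b s) s.
Proof. by rewrite /gain /expu -big_split; apply: eq_bigr => i _; rewrite mulrDr. Qed.

Lemma psum {R : realType} {M : nat} (p : uvec R M) :
  prob_vec p -> \sum_(i < M.+1 | i != ord0) p i <= 1.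
Proof.
case=> hp0 hs; move: hs; rewrite (bigD1 ord0) //= => hs.
have := hp0 ord0; lra.
Qed.

Lemma expu_le {R : realType} {M : nat} (p v w : uvec R M) : prob_vec p ->
  (forall i : 'I_M.+1, i != ord0 -> v i <= w i) -> expu p v <= expu p w.
Proof.
case=> hp _ hvw; rewrite /expu; apply: ler_sum => i hi.
by apply: ler_wpM2l; [exact: hp | exact: hvw].
Qed.

Lemma expu_cst {R : realType} {M : nat} (p : uvec R M) c :
  expu p (fun _ => c) = c * \sum_(i < M.+1 | i != ord0) p i.
Proof. by rewrite /expu mulr_sumr; apply: eq_bigr => i _; rewrite mulrC. Qed.

Lemma expu_S_le {R : realType} {M : nat} (p : uvec R M) :
  prob_vec p -> expu p Sv <= M%:R.
Proof.
move=> hp; apply: (le_trans (@expu_le R M p Sv (fun _ => M%:R) hp _)).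
  by move=> i _; rewrite /Sv ler_nat -ltnS ltn_ord.
rewrite expu_cst; have := psum p hp; have : 0 <= M%:R :> R by [].
move=> h0 h1; rewrite -[leRHS]mulr1; exact: ler_wpM2l.
Qed.

Lemma expu_B_le {R : realType} {M : nat} (p : uvec R M) t :
  prob_vec p -> expu p (Bv t) <= 1.
Proof.
move=> hp; apply: (le_trans (@expu_le R M p (Bv t) (fun _ => 1) hp _)).
  move=> i _; rewrite /Bv; case: ifP => _ //.
  rewrite lerBlDr lerDl; exact: divr_ge0.
by rewrite expu_cst mul1r; exact: psum p hp.
Qed.

Lemma neq0_nat {M : nat} (i : 'I_M.+1) : i != ord0 -> ((i : nat) == 0%N) = false.
Proof. by move=> hi; apply/negbTE; move: hi; apply: contra => /eqP h; apply/eqP/val_inj. Qed.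

Lemma expu_B_rec {R : realType} {M : nat} (p : uvec R M) t : (0 < t)%N ->
  expu p (Bv t.+1) = expu p (Bv t) + expu p Sv / (t.+1%:R * t%:R).
Proof.
move=> ht; rewrite /expu mulr_suml -big_split; apply: eq_bigr => i hi /=.
rewrite /Bv /Sv neq0_nat //.
have h1 : t%:R != 0 :> R by rewrite pnatr_eq0 -lt0n.
have h2 : t%:R + 1 != 0 :> R by rewrite natr1 pnatr_eq0.
rewrite -!natr1; field; exact/andP.
Qed.

Lemma expu_B_fin {R : realType} {M : nat} (p : uvec R M) : (0 < M)%N ->
  expu p (Bv M) + expu p Sv / M%:R = \sum_(i < M.+1 | i != ord0) p i.
Proof.
move=> hM; rewrite /expu mulr_suml -big_split; apply: eq_bigr => i hi /=.
rewrite /Bv /Sv neq0_nat //.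
have h1 : M%:R != 0 :> R by rewrite pnatr_eq0 -lt0n.
by field.
Qed.

Lemma sub_S {R : realType} {M : nat} : submodular (@Sv R M).
Proof.
split => // i hi0 hiM; rewrite /Sv !inordK; last 2 first.
- by apply: leq_ltn_trans (leq_pred _) (ltn_ord i).
- by rewrite ltnS.
case: i hi0 hiM => [[|j] hj] //= _ _.
rewrite -!natr1; lra.
Qed.

Lemma sub_B {R : realType} {M : nat} t : (0 < t)%N -> submodular (@Bv R M t).
Proof.
move=> ht; split; first by rewrite /Bv.
move=> i hi0 hiM; rewrite /Bv !inordK; last 2 first.
- by apply: leq_ltn_trans (leq_pred _) (ltn_ord i).
- by rewrite ltnS.
have tinv : 0 <= t%:R^-1 :> R by rewrite invr_ge0.
case: i hi0 hiM => [[|j] hj] //= _ _.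
case: j hj => [|j] hj /=.
  rewrite !mul1r -!natr1 !mulrDl !mul1r; lra.
rewrite -!natr1 !mulrDl !mul1r; lra.
Qed.

Lemma sub_sc {R : realType} {M : nat} (C : R) (v : uvec R M) :
  0 <= C -> submodular v -> submodular (sc C v).
Proof.
move=> hC [h0 hv]; split; first by rewrite /sc h0 mulr0.
move=> i hi0 hiM; rewrite /sc -!mulrBr; apply: ler_wpM2l => //; exact: hv.
Qed.

Lemma harm1 {R : realType} : harmonic R 1 = 1.
Proof. by rewrite /harmonic big_nat1 invr1. Qed.

Lemma harmS {R : realType} t : harmonic R t.+1 = harmonic R t + t.+1%:R^-1.
Proof. by rewrite /harmonic big_nat_recr. Qed.

Lemma harm_ge1 {R : realType} t : (0 < t)%N -> 1 <= harmonic R t.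
Proof.
elim: t => [//|[|t] IH] _; first by rewrite harm1.
rewrite harmS; have := IH isT; have : 0 <= t.+2%:R^-1 :> R by rewrite invr_ge0.
by move=> h1 h2; apply: (le_trans h2); rewrite lerDl.
Qed.

Definition KEY {R : realType} {M : nat} (r : mechanism R M) (rho : R) :=
  forall b s : uvec R M, submodular b -> submodular s -> 0 < OPT b s ->
    rho * OPT b s <= gain r b s.

Lemma Bv_t {R : realType} {M : nat} t : (0 < t)%N -> (t <= M)%N ->
  @Bv R M t (inord t) = 0.
Proof.
move=> ht htM; rewrite /Bv inordK ?ltnS // (negbTE (lt0n_neq0 ht)) divff ?subrr //.
by rewrite pnatr_eq0 -lt0n.
Qed.

Lemma R2 {R : realType} {M : nat} (r : mechanism R M) (hr : is_mechanism r)
  (hD : DSIC r) (rho C : R) (hrho : 0 <= rho) (hC : 0 < C) (key : KEY r rho)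
  t (ht0 : (0 < t)%N) (htM : (t <= M)%N) :
  rho * t%:R - C^-1 <= expu (r (Bv t) Sv) Sv.
Proof.
have hB : submodular (@Bv R M t) := sub_B t ht0.
have hSc : submodular (sc C (@Sv R M)) := sub_sc C _ (ltW hC) sub_S.
have ds := (hD (Bv t) Sv (Bv t) (sc C Sv) hB sub_S hB hSc).2.
have hopt : C * t%:R <= OPT (@Bv R M t) (sc C Sv).
  have := OPT_ge (@Bv R M t) (sc C Sv) (inord t).
  rewrite Bv_t // /sc /Sv inordK ?ltnS // add0r; apply => //.
  by apply: mulr_ge0; [exact: ltW|].
have hCt : 0 < C * t%:R by apply: mulr_gt0 => //; rewrite ltr0n.
have hk := key _ _ hB hSc (lt_le_trans hCt hopt).
rewrite gainE expu_sc in hk.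
have hb1 := expu_B_le _ t (hr (Bv t) (sc C Sv)).
have h2 := ler_wpM2l hrho hopt.
have h3 : C * (rho * t%:R - C^-1) <= C * expu (r (Bv t) Sv) Sv.
  rewrite mulrBr mulfV ?gt_eqF //.
  set X := expu _ (Bv t) in hk hb1; set Y := expu _ Sv in hk ds.
  set E := expu _ Sv in ds *.
  have : C * Y <= C * E by apply: ler_wpM2l => //; exact: ltW.
  have -> : C * (rho * t%:R) = rho * (C * t%:R) by ring.
  lra.
by rewrite -(ler_pM2l hC).
Qed.

Lemma R1 {R : realType} {M : nat} (hM : (0 < M)%N) (r : mechanism R M) (hr : is_mechanism r)
  (hD : DSIC r) (rho C : R) (hrho : 0 <= rho) (hC : 0 < C) (key : KEY r rho) :
  - (M%:R * C^-1) <= expu (r (Bv 1) Sv) (Bv 1).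
Proof.
have hB : submodular (@Bv R M 1) := sub_B 1 isT.
have hBc : submodular (sc C (@Bv R M 1)) := sub_sc C _ (ltW hC) hB.
have ds := (hD (Bv 1) Sv (sc C (Bv 1)) Sv hB sub_S hBc sub_S).1.
have hopt : 1 <= OPT (sc C (@Bv R M 1)) Sv.
  have := OPT_ge (sc C (@Bv R M 1)) Sv (inord 1).
  rewrite /sc Bv_t // /Sv inordK ?ltnS // mulr0 add0r; apply => //.
have hk := key _ _ hBc sub_S (lt_le_trans ltr01 hopt).
rewrite gainE expu_sc in hk.
have hs := expu_S_le _ (hr (sc C (Bv 1)) Sv).
have h0 : 0 <= rho * OPT (sc C (@Bv R M 1)) Sv.
  by apply: mulr_ge0 => //; apply: le_trans hopt.
have h3 : C * (- (M%:R * C^-1)) <= C * expu (r (Bv 1) Sv) (Bv 1).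
  rewrite mulrN mulrCA mulfV ?gt_eqF // mulr1.
  set Y := expu _ (Bv 1) in hk ds *.
  set X := expu _ Sv in hk hs.
  set E := expu _ (Bv 1) in ds *.
  have : C * Y <= C * E by apply: ler_wpM2l => //; exact: ltW.
  lra.
by rewrite -(ler_pM2l hC).
Qed.

Lemma IC {R : realType} {M : nat} (r : mechanism R M) (hD : DSIC r) t (ht : (0 < t)%N) :
  expu (r (Bv t) Sv) (Bv t) + expu (r (Bv t) Sv) Sv / (t.+1%:R * t%:R)
  <= expu (r (Bv t.+1) Sv) (Bv t.+1).
Proof.
have ds := (hD (Bv t.+1) Sv (Bv t) Sv (sub_B t.+1 isT) sub_S (sub_B t ht) sub_S).1.
by rewrite -expu_B_rec.
Qed.

Lemma chain {R : realType} {M : nat} (hM : (0 < M)%N) (r : mechanism R M)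
  (hr : is_mechanism r) (hD : DSIC r) (rho C : R) (hrho : 0 <= rho) (hC : 0 < C)
  (key : KEY r rho) t : (0 < t)%N -> (t <= M)%N ->
  rho * (harmonic R t - 1) - (M%:R + t%:R) * C^-1 <= expu (r (Bv t) Sv) (Bv t).
Proof.
have hc : 0 < C^-1 by rewrite invr_gt0.
elim: t => [//|[|t] IH] _ htM.
  have := R1 hM r hr hD rho C hrho hC key.
  rewrite harm1 subrr mulr0 sub0r mulrDl mul1r.
  move: (expu _ _) (M%:R * C^-1) => W x; lra.
have IH' := IH isT (ltnW htM).
have hIC := IC r hD t.+1 isT.
have hE := R2 r hr hD rho C hrho hC key t.+1 isT (ltnW htM).
set E := expu _ Sv in hIC hE.
have hD1 : 0 < t.+2%:R * t.+1%:R :> R by rewrite -natrM ltr0n.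
have hE' : rho / t.+2%:R - C^-1 <= E / (t.+2%:R * t.+1%:R).
  rewrite ler_pdivlMr // mulrBl.
  have -> : rho / t.+2%:R * (t.+2%:R * t.+1%:R) = rho * t.+1%:R.
    by field; rewrite -natrD pnatr_eq0.
  apply: le_trans hE; rewrite lerD2l lerN2.
  by rewrite ler_peMr ?(ltW hc) // -natrM ler1n muln_gt0.
rewrite harmS.
have -> : rho * (harmonic R t.+1 + t.+2%:R^-1 - 1) - (M%:R + t.+2%:R) * C^-1
  = (rho * (harmonic R t.+1 - 1) - (M%:R + t.+1%:R) * C^-1) + (rho / t.+2%:R - C^-1).
  by rewrite -!natr1; ring.
move: IH' hIC hE'.
move: (rho * (harmonic R t.+1 - 1) - (M%:R + t.+1%:R) * C^-1) => a.
move: (rho / t.+2%:R - C^-1) => b.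
move: (E / _) => e.
move: (expu _ (Bv t.+1)) (expu _ (Bv t.+2)) => w1 w2.
lra.
Qed.

(* competitive ratio := inf over submodular b,s with OPT(b,s) > 0 of G/OPT;
   "at most 1/H_M" is stated as: for every eps > 0 some submodular instance
   has G_r(b,s) < (1/H_M + eps) * OPT(b,s). *)
Theorem theorem2 (R : realType) (M : nat) (hM : (1 <= M)%N)
  (r : mechanism R M) :
  is_mechanism r -> DSIC r ->
  forall eps : R, 0 < eps ->
  exists b s : uvec R M,
    [/\ submodular b, submodular s, 0 < OPT b s &
        gain r b s < ((harmonic R M)^-1 + eps) * OPT b s].
Proof.
move=> hr hD eps heps.
have hH1 : 1 <= harmonic R M := harm_ge1 M hM.
have hH0 : 0 < harmonic R M by apply: lt_le_trans hH1.
set H := harmonic R M in hH1 hH0 *.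
set rho := H^-1 + eps.
have hrho : 0 <= rho by rewrite /rho; apply: addr_ge0; [rewrite invr_ge0; exact: ltW | exact: ltW].
apply: Classical_Prop.NNPP => Hn.
have key : KEY r rho.
  move=> b s hb hs hO; rewrite leNgt; apply/negP => hlt; apply: Hn.
  by exists b, s; split.
have hM0 : 0 < M%:R :> R by rewrite ltr0n.
set C := 4%:R * M%:R / (eps * H).
have hC : 0 < C.
  by rewrite /C; apply: divr_gt0; [apply: mulr_gt0 => //; rewrite ltr0n | exact: mulr_gt0].
have hc : 0 < C^-1 by rewrite invr_gt0.
have hW := chain hM r hr hD rho C hrho hC key M hM (leqnn M).
have hE := R2 r hr hD rho C hrho hC key M hM (leqnn M).
have hfin := expu_B_fin (r (Bv M) Sv) hM.
have hps := psum _ (hr (Bv M) Sv).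
set E := expu _ Sv in hE hfin.
set W := expu _ (Bv M) in hW hfin.
have hE' : rho - C^-1 <= E / M%:R.
  rewrite ler_pdivlMr // mulrBl.
  apply: le_trans hE; rewrite lerD2l lerN2.
  by rewrite ler_peMr ?(ltW hc) // ler1n.
have hrH : rho * H = 1 + eps * H by rewrite /rho mulrDl mulVf ?gt_eqF.
have hcM : C^-1 * M%:R = eps * H / 4%:R.
  rewrite /C; field; rewrite ?gt_eqF //.
have hcle : C^-1 <= C^-1 * M%:R by rewrite ler_peMr ?(ltW hc) // ler1n.
have hepsH : 0 < eps * H by apply: mulr_gt0.
have hWe : rho * (H - 1) - (M%:R + M%:R) * C^-1 = rho * H - rho - 2%:R * (C^-1 * M%:R).
  by ring.
rewrite hWe hrH hcM in hW.
rewrite hcM in hcle.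
rewrite -hfin in hps.
clear hfin; move: hW hE' hps hcle hepsH.
move: (eps * H) (E / M%:R) (C^-1) W => x e c w.
lra.
Qed.
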